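(* The price function $p$ is concave (resp. convex) on $Q$ if and only if $r$ is concave (resp. convex) on $\big(\overline p(q_h),\overline p(q_\ell)\big)$.
   Context: Let $0<q_\ell<q_h<\infty$, $Q=[q_\ell,q_h]$, and let $c$ be a real number with $0<c<q_\ell$. Let $F$ be a probability distribution on $[0,1]$ with support $[0,1]$ admitting a twice continuously differentiable density $f:(0,1)\to\mathbb{R}_{>0}$. Define $r(v)=(1-F(v))/f(v)$ and $\psi(v)=v-r(v)$ on $(0,1)$, and assume $\psi'(v)>0$ whenever $\psi(v)>0$. For $q\in Q$, $p(q)$ is the unique maximizer over $p\in\mathbb{R}$ of $(p-c)\big(1-F(p/q)\big)$, and $\overline p(q)=p(q)/q$. *)

(* Defs.v *)
From Stdlib Require Import Reals.
From Coquelicot Require Import Coquelicot.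
Open Scope R_scope.

Definition concave_on (D : R -> Prop) (g : R -> R) : Prop :=
  forall x y t, D x -> D y -> 0 <= t <= 1 ->
    t * g x + (1 - t) * g y <= g (t * x + (1 - t) * y).

Definition convex_on (D : R -> Prop) (g : R -> R) : Prop :=
  forall x y t, D x -> D y -> 0 <= t <= 1 ->
    g (t * x + (1 - t) * y) <= t * g x + (1 - t) * g y.

Definition cdf_with_density (F f : R -> R) : Prop :=
  (forall v, continuous F v) /\
  (forall v, v <= 0 -> F v = 0) /\
  (forall v, 1 <= v -> F v = 1) /\
  (forall v, 0 < v < 1 -> is_derive F v (f v)) /\
  (forall v, 0 < v < 1 -> 0 < f v) /\
  (forall v, 0 < v < 1 ->
     ex_derive f v /\ ex_derive (Derive f) v /\ continuous (Derive (Derive f)) v).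

Definition hazr (F f : R -> R) (v : R) : R := (1 - F v) / f v.
Definition virt (F f : R -> R) (v : R) : R := v - hazr F f v.

Definition profit (F : R -> R) (c q x : R) : R := (x - c) * (1 - F (x / q)).

Definition unique_argmax (g : R -> R) (y : R) : Prop :=
  (forall x, g x <= g y) /\ (forall z, (forall x, g x <= g z) -> z = y).

(* Main.v *)
Require Import Defs.
From Stdlib Require Import Reals Lra.
From Coquelicot Require Import Coquelicot.
Open Scope R_scope.

Lemma local_incr (g : R -> R) x y l :
  is_derive g x l -> 0 < l -> x < y -> exists z, x < z < y /\ g x < g z.
Proof.
  intros Hd Hl Hxy. apply is_derive_Reals in Hd.
  destruct (Hd (l/2) ltac:(lra)) as [d Hdd].
  set (h := Rmin (d/2) ((y-x)/2)).
  assert (Hh0 : 0 < h) by (unfold h; apply Rmin_glb_lt; destruct d; simpl; lra).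
  assert (Hh1 : h <= d/2) by apply Rmin_l.
  assert (Hh2 : h <= (y-x)/2) by apply Rmin_r.
  assert (Hd0 := cond_pos d).
  specialize (Hdd h ltac:(lra) ltac:(rewrite Rabs_pos_eq; lra)).
  exists (x + h). split. lra.
  apply Rabs_lt_between in Hdd.
  destruct Hdd as [H1 _].
  assert (H3: l/2 < (g (x+h) - g x)/h) by lra.
  apply Rlt_div_r in H3; [|lra]. nra.
Qed.

Lemma local_decr (g : R -> R) x y l :
  is_derive g x l -> l < 0 -> y < x -> exists z, y < z < x /\ g x < g z.
Proof.
  intros Hd Hl Hxy. apply is_derive_Reals in Hd.
  destruct (Hd (-l/2) ltac:(lra)) as [d Hdd].
  set (h := Rmin (d/2) ((x-y)/2)).
  assert (Hh0 : 0 < h) by (unfold h; apply Rmin_glb_lt; destruct d; simpl; lra).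
  assert (Hh1 : h <= d/2) by apply Rmin_l.
  assert (Hh2 : h <= (x-y)/2) by apply Rmin_r.
  assert (Hd0 := cond_pos d).
  specialize (Hdd (-h) ltac:(lra) ltac:(rewrite Rabs_left; lra)).
  exists (x + - h). split. lra.
  apply Rabs_lt_between in Hdd.
  destruct Hdd as [_ H1].
  assert (H3: (g (x+-h) - g x)/(-h) < l/2) by lra.
  replace ((g (x+-h) - g x)/(-h)) with (-((g (x+-h) - g x)/h)) in H3 by (field; lra).
  assert (H4 : 0 < (g (x+-h) - g x)/h) by lra.
  apply Rlt_div_r in H4; [|lra]. lra.
Qed.

Lemma conv_mem a b x y t : a <= x <= b -> a <= y <= b -> 0 <= t <= 1 ->
  a <= t*x + (1-t)*y <= b.
Proof. intros Hx Hy Ht.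
  assert (0 <= t*(x-a)) by (apply Rmult_le_pos; lra).
  assert (0 <= (1-t)*(y-a)) by (apply Rmult_le_pos; lra).
  assert (0 <= t*(b-x)) by (apply Rmult_le_pos; lra).
  assert (0 <= (1-t)*(b-y)) by (apply Rmult_le_pos; lra).
  split; nra. Qed.

Lemma eps_lim : is_lim_seq (fun n => / INR (S (S n))) 0.
Proof.
  apply (proj1 (is_lim_seq_incr_1 (fun n => / INR (S n)) 0)).
  apply (proj1 (is_lim_seq_incr_1 (fun n => / INR n) 0)).
  change (Finite 0) with (Rbar_inv p_infty).
  apply is_lim_seq_inv; [apply is_lim_seq_INR|discriminate].
Qed.

Lemma convex_close (g : R -> R) a b : a < b ->
  (forall x, a <= x <= b -> continuous g x) ->
  (forall x y t, a < x < b -> a < y < b -> 0 <= t <= 1 ->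
    g (t * x + (1 - t) * y) <= t * g x + (1 - t) * g y) ->
  (forall x y t, a <= x <= b -> a <= y <= b -> 0 <= t <= 1 ->
    g (t * x + (1 - t) * y) <= t * g x + (1 - t) * g y).
Proof.
  intros Hab Hc Hconv x y t Hx Hy Ht.
  set (m := (a+b)/2).
  set (e := fun n => / INR (S (S n))).
  set (s := fun n w => w + e n * (m - w)).
  assert (He : forall n, 0 < e n < 1).
  { intro n. unfold e. rewrite S_INR, S_INR. assert (0 <= INR n) by apply pos_INR.
    split. apply Rinv_0_lt_compat; lra.
    rewrite <- Rinv_1. apply Rinv_lt_contravar; lra. }
  assert (Hs : forall n w, a <= w <= b -> a < s n w < b).
  { intros n w Hw. specialize (He n). unfold s, m. nra. }
  assert (Hl : forall w, a <= w <= b -> is_lim_seq (fun n => g (s n w)) (g w)).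
  { intros w Hw. apply is_lim_seq_continuous.
    apply continuity_pt_filterlim. apply Hc; auto.
    assert (Hq : is_lim_seq (fun n => s n w) (w + 0 * (m - w))).
    { apply is_lim_seq_plus'. apply is_lim_seq_const.
      apply is_lim_seq_mult'. apply eps_lim. apply is_lim_seq_const. }
    replace (w + 0 * (m - w)) with w in Hq by ring. exact Hq. }
  set (z := t*x + (1-t)*y).
  assert (Hz : a <= z <= b) by (apply conv_mem; auto).
  assert (Hle : forall n, g (s n z) <= t * g (s n x) + (1-t) * g (s n y)).
  { intro n. replace (s n z) with (t * s n x + (1-t) * s n y) by (unfold s, z; ring).
    apply Hconv; auto. }
  assert (Hlim := is_lim_seq_le _ _ _ _ Hle (Hl z Hz)
    (is_lim_seq_plus' _ _ _ _ (is_lim_seq_scal_l _ t _ (Hl x Hx))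
                              (is_lim_seq_scal_l _ (1-t) _ (Hl y Hy)))).
  simpl in Hlim. exact Hlim.
Qed.

Lemma virt_ex_derive F f v : cdf_with_density F f -> 0 < v < 1 -> ex_derive (virt F f) v.
Proof.
  intros [HFc [HF0 [HF1 [HFd [Hfp Hf2]]]]] Hv.
  change (virt F f) with (fun v => v - (1 - F v) / f v).
  specialize (Hfp v Hv). destruct (Hf2 v Hv) as [Hfd _].
  assert (HFe : ex_derive F v) by (exists (f v); apply HFd; auto).
  auto_derive. repeat split; auto. lra.
Qed.

Lemma virt_mono F f u1 u2 : cdf_with_density F f ->
  (forall v, 0 < v < 1 -> 0 < virt F f v -> 0 < Derive (virt F f) v) ->
  0 < u1 -> u1 < u2 -> u2 < 1 -> 0 < virt F f u1 -> virt F f u1 < virt F f u2.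
Proof.
  intros HF Hpsi H1 H12 H2 Hp.
  set (g := virt F f).
  assert (Hcont : forall c, u1 <= c <= u2 -> continuity_pt g c).
  { intros c Hc. apply continuity_pt_filterlim. apply (@ex_derive_continuous R_AbsRing R_NormedModule).
    apply virt_ex_derive; auto; lra. }
  destruct (continuity_ab_maj g u1 u2 ltac:(lra) Hcont) as [M [HM HMi]].
  assert (Hloc : forall x y, u1 <= x -> x < y -> y <= u2 -> 0 < g x -> exists z, x < z < y /\ g x < g z).
  { intros x y Hx Hxy Hy Hgx. apply local_incr with (l := Derive g x); auto.
    apply Derive_correct. apply virt_ex_derive; auto; lra.
    apply Hpsi; auto; lra. }
  destruct (Rlt_or_le M u2) as [HMl|HMe].
  - exfalso.
    assert (HgM : g u1 <= g M) by (apply HM; lra).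
    destruct (Hloc M u2 ltac:(lra) HMl ltac:(lra) ltac:(unfold g in *; lra)) as [z [Hz Hgz]].
    assert (g z <= g M) by (apply HM; lra). lra.
  - destruct (Hloc u1 u2 ltac:(lra) H12 ltac:(lra) Hp) as [z [Hz Hgz]].
    assert (g z <= g M) by (apply HM; lra).
    replace M with u2 in * by lra. unfold g in *. lra.
Qed.

Lemma virt_le_rev F f u w : cdf_with_density F f ->
  (forall v, 0 < v < 1 -> 0 < virt F f v -> 0 < Derive (virt F f) v) ->
  0 < u < 1 -> 0 < w < 1 -> 0 < virt F f w ->
  virt F f u <= virt F f w -> u <= w.
Proof.
  intros HF Hpsi Hu Hw Hpw Hle.
  destruct (Rle_or_lt u w) as [|Hlt]; auto.
  exfalso. assert (H := virt_mono F f w u HF Hpsi ltac:(lra) Hlt ltac:(lra) Hpw). lra.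
Qed.

Lemma virt_le F f u w : cdf_with_density F f ->
  (forall v, 0 < v < 1 -> 0 < virt F f v -> 0 < Derive (virt F f) v) ->
  0 < u < 1 -> 0 < w < 1 -> 0 < virt F f u ->
  u <= w -> virt F f u <= virt F f w.
Proof.
  intros HF Hpsi Hu Hw Hpu Hle.
  destruct (Req_dec u w) as [->|Hne]; [lra|].
  left. apply virt_mono; auto; lra.
Qed.

Lemma foc F f c q x : cdf_with_density F f -> 0 < c -> c < q ->
  unique_argmax (profit F c q) x -> 0 < x / q < 1 /\ virt F f (x / q) = c / q.
Proof.
  intros HF Hc Hcq [Hmax Huniq].
  destruct HF as [HFc [HF0 [HF1 [HFd [Hfp Hf2]]]]].
  unfold profit in *.
  assert (Hv0 : 0 < x / q).
  { destruct (Rlt_or_le 0 (x/q)) as [|Hle]; auto. exfalso.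
    specialize (Hmax q). rewrite (HF0 (x/q)) in Hmax by auto.
    replace (q/q) with 1 in Hmax; [|field; lra]. rewrite (HF1 1) in Hmax by lra.
    assert (x <= 0).
    { apply Rmult_le_reg_r with (/q). apply Rinv_0_lt_compat; lra. unfold Rdiv in Hle. lra. }
    lra. }
  assert (Hv1 : x / q < 1).
  { destruct (Rlt_or_le (x/q) 1) as [|Hle]; auto. exfalso.
    assert (Hx0 : (x - c) * (1 - F (x/q)) = 0) by (rewrite HF1 by auto; ring).
    assert (Hz : x + q = x).
    { apply Huniq. intro y. rewrite (HF1 ((x+q)/q)).
      - specialize (Hmax y). rewrite Hx0 in Hmax. replace (1-1) with 0 by ring. lra.
      - replace ((x+q)/q) with (x/q + 1) by (field; lra). lra. }
    lra. }
  split; [lra|].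
  set (v := x / q) in *.
  assert (Hfv := Hfp v (conj Hv0 Hv1)).
  set (D := (1 - F v) + (x - c) * (- (f v / q))).
  assert (Hd : is_derive (fun y => (y - c) * (1 - F (y / q))) x D).
  { assert (HFe : ex_derive F v) by (exists (f v); apply HFd; auto).
    auto_derive. auto. change (Derive (fun x : R => F x) (x * / q)) with (Derive F v).
    change (x * / q) with v. rewrite (is_derive_unique F v (f v)) by (apply HFd; auto).
    unfold D. field. lra. }
  assert (HD : D = 0).
  { destruct (Rtotal_order D 0) as [Hn|[He|Hp]]; auto; exfalso.
    - destruct (local_decr _ x (x-1) D Hd Hn ltac:(lra)) as [z [_ Hz]].
      specialize (Hmax z). cbv beta in Hz. fold v in Hz. lra.
    - destruct (local_incr _ x (x+1) D Hd Hp ltac:(lra)) as [z [_ Hz]].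
      specialize (Hmax z). cbv beta in Hz. fold v in Hz. lra. }
  unfold virt, hazr. unfold D in HD.
  replace x with (v * q) in HD by (unfold v; field; lra).
  assert (E : 1 - F v = (v*q - c) * (f v / q)) by lra.
  rewrite E. field. lra.
Qed.

Theorem lemma10 (ql qh c : R) (F f p : R -> R)
  (Hq : 0 < ql < qh) (Hc : 0 < c < ql)
  (HF : cdf_with_density F f)
  (Hpsi : forall v, 0 < v < 1 -> 0 < virt F f v -> 0 < Derive (virt F f) v)
  (Hp : forall q, ql <= q <= qh -> unique_argmax (profit F c q) (p q)) :
  let Q := fun q => ql <= q <= qh in
  let I := fun v => p qh / qh < v < p ql / ql in
  (concave_on Q p <-> concave_on I (hazr F f)) /\
  (convex_on Q p <-> convex_on I (hazr F f)).
Proof.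
  intros Q I.
  set (psi := virt F f).
  set (V := fun q => p q / q).
  assert (Hfoc : forall q, Q q -> 0 < V q < 1 /\ psi (V q) = c / q).
  { intros q Hq'. unfold Q in Hq'. apply foc; [auto|lra|lra|apply Hp; auto]. }
  assert (Hpq : forall q, Q q -> p q = q * V q).
  { intros q Hq'. unfold V. unfold Q in Hq'. field. lra. }
  set (a := V qh). set (b := V ql).
  assert (HQl : Q ql) by (unfold Q; lra).
  assert (HQh : Q qh) by (unfold Q; lra).
  destruct (Hfoc qh HQh) as [Ha Hpa]. destruct (Hfoc ql HQl) as [Hb Hpb].
  fold a in Ha, Hpa. fold b in Hb, Hpb.
  assert (Hcq : c / qh < c / ql).
  { apply Rmult_lt_compat_l; [lra|]. apply Rinv_lt_contravar; nra. }
  assert (Hcq0 : 0 < c / qh) by (apply Rdiv_lt_0_compat; lra).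
  assert (Hab : a < b).
  { assert (a <= b) by (apply (virt_le_rev F f); auto; fold psi; lra).
    destruct (Req_dec a b) as [E|]; [|lra]. rewrite E in Hpa. lra. }
  assert (Hrange : forall u, a <= u <= b -> 0 < u < 1 /\ c / qh <= psi u <= c / ql).
  { intros u Hu. assert (Hu1 : 0 < u < 1) by lra.
    assert (psi a <= psi u) by (apply (virt_le F f); auto; fold psi; lra).
    split; auto. split; [lra|].
    rewrite <- Hpb. apply (virt_le F f); auto; fold psi; lra. }
  assert (HVin : forall q, Q q -> a <= V q <= b).
  { intros q Hq'. destruct (Hfoc q Hq') as [Hv Hpv].
    assert (c / q <= c / ql).
    { unfold Q in Hq'. apply Rmult_le_compat_l; [lra|]. apply Rinv_le_contravar; lra. }
    assert (c / qh <= c / q).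
    { unfold Q in Hq'. apply Rmult_le_compat_l; [lra|]. apply Rinv_le_contravar; lra. }
    split.
    - apply (virt_le_rev F f); auto; fold psi; lra.
    - apply (virt_le_rev F f); auto; fold psi; lra. }
  assert (Hinv : forall u, a <= u <= b -> Q (c / psi u) /\ V (c / psi u) = u).
  { intros u Hu. destruct (Hrange u Hu) as [Hu1 [Hl Hh]].
    set (K := c / psi u).
    assert (HK : K * psi u = c) by (unfold K; field; lra).
    assert (E1 : c / ql * ql = c) by (field; lra).
    assert (E2 : c / qh * qh = c) by (field; lra).
    assert (HQK : Q K) by (unfold Q; split; nra).
    split; auto.
    destruct (Hfoc K HQK) as [Hv Hpv].
    assert (E : psi (V K) = psi u) by (rewrite Hpv; unfold K; field; lra).
    apply Rle_antisym.
    - apply (virt_le_rev F f); auto; fold psi; lra.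
    - apply (virt_le_rev F f); auto; fold psi; lra. }

  assert (Hpsipos : forall u, a <= u <= b -> 0 < u < 1 /\ 0 < psi u).
  { intros u Hu. destruct (Hrange u Hu) as [? [? ?]]. split; auto; lra. }
  assert (Hcont : forall x, a <= x <= b -> continuous psi x).
  { intros x Hx. apply (@ex_derive_continuous R_AbsRing R_NormedModule).
    apply virt_ex_derive; auto; lra. }
  assert (Hcontn : forall x, a <= x <= b -> continuous (fun u => - psi u) x).
  { intros x Hx. apply (@ex_derive_continuous R_AbsRing R_NormedModule).
    apply (ex_derive_opp (V:=R_NormedModule) psi). apply virt_ex_derive; auto; lra. }
  assert (A1 : concave_on Q p -> forall u1 u2 t, a <= u1 <= b -> a <= u2 <= b -> 0 <= t <= 1 ->
     psi (t * u1 + (1 - t) * u2) <= t * psi u1 + (1 - t) * psi u2).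
  { intros Hcv u1 u2 t H1 H2 Ht.
    destruct (Hpsipos u1 H1) as [H1u H1p]. destruct (Hpsipos u2 H2) as [H2u H2p].
    destruct (Hinv u1 H1) as [HQ1 HV1]. destruct (Hinv u2 H2) as [HQ2 HV2].
    set (q1 := c / psi u1) in *. set (q2 := c / psi u2) in *.
    set (S := t * psi u1 + (1 - t) * psi u2).
    assert (HS : 0 < S) by (unfold S; nra).
    set (w := t * u1 + (1 - t) * u2).
    assert (Hw : a <= w <= b) by (apply conv_mem; auto).
    destruct (Hpsipos w Hw) as [Hwu Hwp].
    set (q := c / S). set (mu := t * psi u1 / S).
    assert (HmuS : mu * S = t * psi u1) by (unfold mu; field; lra).
    assert (Hmu : 0 <= mu <= 1).
    { assert (0 <= t * psi u1) by nra. assert (t * psi u1 <= S) by (unfold S; nra).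
      unfold mu. split. apply Rdiv_le_0_compat; lra. apply Rle_div_l; lra. }
    assert (Hqc : q = mu * q1 + (1 - mu) * q2).
    { assert (HS' := HS). unfold S in HS'. unfold q, mu, q1, q2, S. field. repeat split; lra. }
    assert (HQq : Q q) by (rewrite Hqc; apply conv_mem; auto).
    assert (Hconc := Hcv q1 q2 mu HQ1 HQ2 Hmu).
    rewrite <- Hqc, (Hpq q HQq), (Hpq q1 HQ1), (Hpq q2 HQ2), HV1, HV2 in Hconc.
    assert (E1 : mu * (q1 * u1) + (1 - mu) * (q2 * u2) = q * w).
    { assert (HS' := HS). unfold S in HS'. unfold mu, q1, q2, q, w, S. field. repeat split; lra. }
    rewrite E1 in Hconc.
    assert (Hq0 : 0 < q) by (unfold q; apply Rdiv_lt_0_compat; lra).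
    assert (Hwv : w <= V q) by (apply Rmult_le_reg_l with q; lra).
    destruct (Hfoc q HQq) as [Hvq Hpvq].
    assert (psi w <= psi (V q)) by (apply (virt_le F f); auto).
    rewrite Hpvq in H. unfold q in H. replace (c / (c / S)) with S in H by (field; lra).
    exact H. }
  assert (B1 : convex_on Q p -> forall u1 u2 t, a <= u1 <= b -> a <= u2 <= b -> 0 <= t <= 1 ->
     t * psi u1 + (1 - t) * psi u2 <= psi (t * u1 + (1 - t) * u2)).
  { intros Hcv u1 u2 t H1 H2 Ht.
    destruct (Hpsipos u1 H1) as [H1u H1p]. destruct (Hpsipos u2 H2) as [H2u H2p].
    destruct (Hinv u1 H1) as [HQ1 HV1]. destruct (Hinv u2 H2) as [HQ2 HV2].
    set (q1 := c / psi u1) in *. set (q2 := c / psi u2) in *.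
    set (S := t * psi u1 + (1 - t) * psi u2).
    assert (HS : 0 < S) by (unfold S; nra).
    set (w := t * u1 + (1 - t) * u2).
    assert (Hw : a <= w <= b) by (apply conv_mem; auto).
    destruct (Hpsipos w Hw) as [Hwu Hwp].
    set (q := c / S). set (mu := t * psi u1 / S).
    assert (HmuS : mu * S = t * psi u1) by (unfold mu; field; lra).
    assert (Hmu : 0 <= mu <= 1).
    { assert (0 <= t * psi u1) by nra. assert (t * psi u1 <= S) by (unfold S; nra).
      unfold mu. split. apply Rdiv_le_0_compat; lra. apply Rle_div_l; lra. }
    assert (Hqc : q = mu * q1 + (1 - mu) * q2).
    { assert (HS' := HS). unfold S in HS'. unfold q, mu, q1, q2, S. field. repeat split; lra. }
    assert (HQq : Q q) by (rewrite Hqc; apply conv_mem; auto).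
    assert (Hconc := Hcv q1 q2 mu HQ1 HQ2 Hmu).
    rewrite <- Hqc, (Hpq q HQq), (Hpq q1 HQ1), (Hpq q2 HQ2), HV1, HV2 in Hconc.
    assert (E1 : mu * (q1 * u1) + (1 - mu) * (q2 * u2) = q * w).
    { assert (HS' := HS). unfold S in HS'. unfold mu, q1, q2, q, w, S. field. repeat split; lra. }
    rewrite E1 in Hconc.
    assert (Hq0 : 0 < q) by (unfold q; apply Rdiv_lt_0_compat; lra).
    assert (Hwv : V q <= w) by (apply Rmult_le_reg_l with q; lra).
    destruct (Hfoc q HQq) as [Hvq Hpvq].
    assert (Hcq' : 0 < c / q) by (apply Rdiv_lt_0_compat; lra).
    assert (psi (V q) <= psi w) by (apply (virt_le F f); auto; fold psi; lra).
    rewrite Hpvq in H. unfold q in H. replace (c / (c / S)) with S in H by (field; lra).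
    exact H. }
  assert (A2 : (forall u1 u2 t, a <= u1 <= b -> a <= u2 <= b -> 0 <= t <= 1 ->
     psi (t * u1 + (1 - t) * u2) <= t * psi u1 + (1 - t) * psi u2) -> concave_on Q p).
  { intros Hcv q1 q2 t HQ1 HQ2 Ht.
    set (q := t * q1 + (1 - t) * q2).
    assert (HQq : Q q) by (apply conv_mem; auto).
    unfold Q in HQ1, HQ2, HQq.
    assert (Hq0 : 0 < q) by lra.
    set (mu := t * q1 / q).
    assert (Hmu : 0 <= mu <= 1).
    { assert (mu * q = t * q1) by (unfold mu; field; lra).
      assert (0 <= t * q1) by nra. assert (t * q1 <= q) by (unfold q; nra).
      unfold mu. split. apply Rdiv_le_0_compat; lra. apply Rle_div_l; lra. }
    destruct (Hfoc q1 HQ1) as [Hv1 Hp1]. destruct (Hfoc q2 HQ2) as [Hv2 Hp2].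
    destruct (Hfoc q HQq) as [Hv Hpv].
    set (w := mu * V q1 + (1 - mu) * V q2).
    assert (Hw : a <= w <= b) by (apply conv_mem; auto).
    destruct (Hpsipos w Hw) as [Hwu Hwp].
    assert (Hpw := Hcv (V q1) (V q2) mu (HVin q1 HQ1) (HVin q2 HQ2) Hmu).
    fold w in Hpw. rewrite Hp1, Hp2 in Hpw.
    replace (mu * (c / q1) + (1 - mu) * (c / q2)) with (c / q) in Hpw
      by (assert (Hq0' := Hq0); unfold q in Hq0'; unfold mu, q; field; repeat split; lra).
    rewrite <- Hpv in Hpw.
    assert (Hwv : w <= V q) by (apply (virt_le_rev F f); auto; fold psi; lra).
    rewrite (Hpq q1 HQ1), (Hpq q2 HQ2), (Hpq q HQq).
    assert (E1 : t * (q1 * V q1) + (1 - t) * (q2 * V q2) = q * w).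
    { assert (Hq0' := Hq0); unfold q in Hq0'. unfold w, mu, q. field. lra. }
    rewrite E1. apply Rmult_le_compat_l; lra. }
  assert (B2 : (forall u1 u2 t, a <= u1 <= b -> a <= u2 <= b -> 0 <= t <= 1 ->
     t * psi u1 + (1 - t) * psi u2 <= psi (t * u1 + (1 - t) * u2)) -> convex_on Q p).
  { intros Hcv q1 q2 t HQ1 HQ2 Ht.
    set (q := t * q1 + (1 - t) * q2).
    assert (HQq : Q q) by (apply conv_mem; auto).
    unfold Q in HQ1, HQ2, HQq.
    assert (Hq0 : 0 < q) by lra.
    set (mu := t * q1 / q).
    assert (Hmu : 0 <= mu <= 1).
    { assert (mu * q = t * q1) by (unfold mu; field; lra).
      assert (0 <= t * q1) by nra. assert (t * q1 <= q) by (unfold q; nra).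
      unfold mu. split. apply Rdiv_le_0_compat; lra. apply Rle_div_l; lra. }
    destruct (Hfoc q1 HQ1) as [Hv1 Hp1]. destruct (Hfoc q2 HQ2) as [Hv2 Hp2].
    destruct (Hfoc q HQq) as [Hv Hpv].
    set (w := mu * V q1 + (1 - mu) * V q2).
    assert (Hw : a <= w <= b) by (apply conv_mem; auto).
    destruct (Hpsipos w Hw) as [Hwu Hwp].
    assert (Hpw := Hcv (V q1) (V q2) mu (HVin q1 HQ1) (HVin q2 HQ2) Hmu).
    fold w in Hpw. rewrite Hp1, Hp2 in Hpw.
    replace (mu * (c / q1) + (1 - mu) * (c / q2)) with (c / q) in Hpw
      by (assert (Hq0' := Hq0); unfold q in Hq0'; unfold mu, q; field; repeat split; lra).
    rewrite <- Hpv in Hpw.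
    assert (Hwv : V q <= w) by (apply (virt_le_rev F f); auto; fold psi; lra).
    rewrite (Hpq q1 HQ1), (Hpq q2 HQ2), (Hpq q HQq).
    assert (E1 : t * (q1 * V q1) + (1 - t) * (q2 * V q2) = q * w).
    { assert (Hq0' := Hq0); unfold q in Hq0'. unfold w, mu, q. field. lra. }
    rewrite E1. apply Rmult_le_compat_l; lra. }
  split; split.
  - intros Hcv x y t Hx Hy Ht. unfold I in Hx, Hy.
    assert (H := A1 Hcv x y t ltac:(change a with (p qh / qh); change b with (p ql / ql); lra)
      ltac:(change a with (p qh / qh); change b with (p ql / ql); lra) Ht).
    unfold psi, virt in H. lra.
  - intros Hr. apply A2. apply (convex_close psi a b Hab Hcont).
    intros x y t Hx Hy Ht. specialize (Hr x y t Hx Hy Ht). unfold psi, virt. lra.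
  - intros Hcv x y t Hx Hy Ht. unfold I in Hx, Hy.
    assert (H := B1 Hcv x y t ltac:(change a with (p qh / qh); change b with (p ql / ql); lra)
      ltac:(change a with (p qh / qh); change b with (p ql / ql); lra) Ht).
    unfold psi, virt in H. lra.
  - intros Hr. apply B2. intros u1 u2 t H1 H2 Ht.
    assert (H := convex_close (fun u => - psi u) a b Hab Hcontn).
    assert (H' : - psi (t * u1 + (1 - t) * u2) <= t * (- psi u1) + (1 - t) * (- psi u2)).
    { apply H; auto. intros x y s Hx Hy Hs. specialize (Hr x y s Hx Hy Hs).
      unfold psi, virt. lra. }
    lra.
Qed.
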